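(* Let $\lambda_{\max}>1$ and let $F:[0,\lambda_{\max}]\to\mathbb{R}_+$ be continuously differentiable with $F(0)=0$, such that $F(x)<F^\star$ for all $x\in[0,1)$ and $F'(1)>0$. If $F$ is concave-like, then the Dirac measure at $1$ (i.e. $\alpha(\{1\})=1$) is the unique optimal solution of the optimization problem defining $F^\star$. Otherwise, there exist $x_1^\star\in(1,\lambda_{\max}]$, $x_2^\star\in[0,1)$ and $p^\star\in(0,1)$ such that the measure $\alpha$ with $\alpha(\{x_1^\star\})=p^\star$ and $\alpha(\{x_2^\star\})=1-p^\star$ is an optimal solution of that problem.
   Context: $F^\star=\sup\{\mathbb{E}_\alpha[F(X)]:\alpha$ a probability measure on $[0,\lambda_{\max}]$, $X\sim\alpha$, $\mathbb{E}_\alpha[X]\le1\}$. $F$ is called concave-like if for all $x_1,x_2\in[0,\lambda_{\max}]\setminus\{1\}$ and $p\in(0,1)$ with $px_1+(1-p)x_2=1$, we have $F(1)>pF(x_1)+(1-p)F(x_2)$. *)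

(* Defs.v *)
From HB Require Import structures.
From mathcomp Require Import all_boot all_order all_algebra.
From mathcomp Require Import all_classical all_reals all_analysis.
Set Implicit Arguments. Unset Strict Implicit. Unset Printing Implicit Defensive.
Import Order.TTheory GRing.Theory Num.Theory.
Import numFieldNormedType.Exports.
Local Open Scope classical_set_scope.
Local Open Scope ring_scope.

(* Probability measures on [0, lmax] are modelled as probability measures on
   the Borel/Lebesgue-measurable real line that give full mass to [0, lmax]. *)

Section Defs.
Context {R : realType}.

Definition dom (lmax : R) : set R := `[0, lmax]%classic.

Definition feasible (lmax : R) (mu : probability R R) : Prop :=
  mu (dom lmax) = 1%E /\ (\int[mu]_(x in dom lmax) (x%:E) <= 1)%E.

Definition objective (lmax : R) (F : R -> R) (mu : probability R R) : \bar R :=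
  \int[mu]_(x in dom lmax) (F x)%:E.

Definition Fstar (lmax : R) (F : R -> R) : \bar R :=
  ereal_sup [set v | exists mu : probability R R,
                       feasible lmax mu /\ objective lmax F mu = v].

Definition optimal (lmax : R) (F : R -> R) (mu : probability R R) : Prop :=
  feasible lmax mu /\ objective lmax F mu = Fstar lmax F.

Definition concave_like (lmax : R) (F : R -> R) : Prop :=
  forall x1 x2 p : R,
    x1 \in `[0, lmax] -> x2 \in `[0, lmax] -> x1 != 1 -> x2 != 1 ->
    0 < p < 1 -> p * x1 + (1 - p) * x2 = 1 ->
    p * F x1 + (1 - p) * F x2 < F 1.

Definition C1_on (a b : R) (F : R -> R) : Prop :=
  {within `[a, b], continuous F} /\
  exists G : R -> R, {within `[a, b], continuous G} /\
    forall x, x \in `]a, b[ -> is_derive x 1 F (G x).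

End Defs.

(* Main.v *)
From HB Require Import structures.
From mathcomp Require Import all_boot all_order all_algebra.
From mathcomp Require Import all_classical all_reals all_analysis.
From mathcomp Require Import measurable_realfun.
From mathcomp Require Import ring lra.
Require Import Defs.
Import Order.TTheory GRing.Theory Num.Theory.
Import numFieldNormedType.Exports.
Local Open Scope classical_set_scope.
Local Open Scope ring_scope.
Set Implicit Arguments. Unset Strict Implicit. Unset Printing Implicit Defensive.
Section TwoPoint.
Context {R : realType} (x y p : R).
Definition qc : R := Num.min (Num.max p 0) 1.
Lemma qc0 : 0 <= qc.
Proof. by rewrite /qc le_min ler01 le_max lexx orbT. Qed.
Lemma qc1 : 0 <= 1 - qc.
Proof. by rewrite /qc subr_ge0 ge_min lexx orbT. Qed.
Definition tp_raw : {measure set R -> \bar R} :=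
  measure_add (mscale (NngNum qc0) (\d_y : {measure set R -> \bar R}))
              (mscale (NngNum qc1) (\d_x : {measure set R -> \bar R})).
Definition tp (A : set R) : \bar R := tp_raw A.
Let tp0 : tp set0 = 0%E. Proof. exact: measure0. Qed.
Let tp_ge0 A : (0 <= tp A)%E. Proof. exact: measure_ge0. Qed.
Let tp_sa : semi_sigma_additive tp. Proof. exact: measure_semi_sigma_additive. Qed.
HB.instance Definition _ := isMeasure.Build _ _ _ tp tp0 tp_ge0 tp_sa.
Lemma tpE A : tp A = (qc%:E * \d_y A + (1 - qc)%:E * \d_x A)%E.
Proof. exact: measure_addE. Qed.
Let tpT : tp setT = 1%E.
Proof. by rewrite tpE !diracE !in_setT /= !mule1 -EFinD subrKC. Qed.
HB.instance Definition _ := @Measure_isProbability.Build _ _ R tp tpT.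

Lemma tp_integral (D : set R) (g : R -> \bar R) : measurable D ->
  measurable_fun D g -> (forall z, D z -> 0 <= g z)%E -> D x -> D y ->
  (\int[tp]_(z in D) g z = qc%:E * g y + (1 - qc)%:E * g x)%E.
Proof.
move=> mD mg g0 Dx Dy.
rewrite (@eq_measure_integral _ _ _ _ tp_raw); last by [].
rewrite ge0_integral_measure_add // !ge0_integral_mscale // !integral_dirac //.
by rewrite !diracE !mem_set //= !mul1e.
Qed.
End TwoPoint.

Section Main.
Context {R : realType} (lmax : R) (F : R -> R).
Hypothesis lmax1 : 1 < lmax.
Hypothesis cF : {within `[0, lmax], continuous F}.
Hypothesis F0 : forall x, x \in `[0, lmax] -> 0 <= F x.

Lemma mdom : measurable (dom lmax).
Proof. exact: measurable_itv. Qed.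

Lemma mF : measurable_fun (dom lmax) F.
Proof. apply: subspace_continuous_measurable_fun => //; exact: mdom. Qed.

Lemma bnd_int (mu : probability R R) (g : R -> R) (M : R) :
  measurable_fun (dom lmax) g -> (forall x, dom lmax x -> `|g x| <= M) ->
  mu.-integrable (dom lmax) (EFin \o g).
Proof.
move=> mg gM; apply: measurable_bounded_integrable => //.
- exact: mdom.
- by rewrite (le_lt_trans (probability_le1 _ mdom)) // ltry.
- exists M; split; first exact: num_real.
  move=> N MN x Dx /=; exact: le_trans (gM x Dx) (ltW MN).
Qed.

Lemma line_bound (mu : probability R R) (g : R -> R) (c b : R) :
  feasible lmax mu -> measurable_fun (dom lmax) g -> 0 <= b ->
  (forall x, dom lmax x -> 0 <= g x <= c + b * x) ->
  (\int[mu]_(x in dom lmax) (g x)%:E <= (c + b)%:E)%E.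
Proof.
move=> [muD muI] mg b0 gb.
have Dx x : dom lmax x -> 0 <= x <= lmax.
  by rewrite /dom /= in_itv.
have ig : mu.-integrable (dom lmax) (EFin \o g).
  apply: (@bnd_int _ _ (`|c| + b * lmax)) => // x /[dup] /Dx /andP[x0 xl] /gb /andP[g0 gc].
  rewrite ger0_norm //; apply: (le_trans gc); apply: lerD; first exact: ler_norm.
  exact: ler_wpM2l.
have iid : mu.-integrable (dom lmax) (EFin \o id).
  apply: (@bnd_int _ _ lmax) => // x /Dx /andP[x0 xl]; by rewrite ger0_norm.
have ic : mu.-integrable (dom lmax) (EFin \o cst c).
  by apply: (@bnd_int _ _ `|c|) => //.
apply: (@le_trans _ _ (\int[mu]_(x in dom lmax) ((cst c x)%:E + b%:E * (x%:E)))%E).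
  apply: (le_integral mdom) => //.
    have H := (integrableD mdom ic (integrableZl mdom b iid)). exact H.
  move=> x xD. have := xD. rewrite inE => /gb /andP[_ gc] /=. rewrite -EFinM -EFinD lee_fin //.
rewrite (integralD mdom ic (integrableZl mdom b iid)).
have -> : (\int[mu]_(x in dom lmax) (EFin \o cst c) x = c%:E)%E.
  have := integral_cst mu mdom c%:E. rewrite /=. by move=> ->; rewrite muD mule1.
rewrite (integralZl mdom iid) EFinD leeD2l //.
by rewrite -[leRHS]mule1 lee_pmul // ?lee_fin // integral_ge0 // => x /=; rewrite /dom /= in_itv => /andP[]; rewrite lee_fin.
Qed.
End Main.

Section Aux.
Context {R : realType}.

Lemma near0 (P : R -> Prop) : (\forall h \near 0^', P h) ->
  exists2 e : R, 0 < e & forall h, 0 < `|h| < e -> P h.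
Proof.
move=> /nbhs_ballP [e e0 He]; exists e => // h /andP[h0 he]; apply: He.
  by rewrite /ball /= sub0r normrN.
by rewrite -normr_gt0.
Qed.

Lemma deriv_eps (f : R -> R) (a d : R) : is_derive a 1 f d -> forall e, 0 < e ->
  exists2 del, 0 < del & forall h, 0 < `|h| < del ->
    `|d - h^-1 * (f (h + a) - f a)| < e.
Proof.
move=> [dv dval] e e0.
have Hc : (fun h => h^-1 *: ((f \o shift a) (h *: 1) - f a)) @ 0^' --> d.
  by rewrite -dval; exact: dv.
move/cvgrPdist_lt: Hc => /(_ e e0) /near0 [del del0 Hd].
exists del => // h hd; have := Hd h hd; by rewrite /= [h%:A]mulr1.
Qed.
End Aux.

Section Part.
Context {R : realType} (lmax : R) (F : R -> R).

Lemma domP x : dom lmax x <-> 0 <= x <= lmax.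
Proof. by rewrite /dom /= in_itv. Qed.

Lemma qcE (p : R) : 0 <= p <= 1 -> qc p = p.
Proof.
move=> /andP[p0 p1]; rewrite /qc.
have -> : Num.max p 0 = p by apply/max_idPl.
by apply/min_idPl.
Qed.

Lemma mEFin : measurable_fun (dom lmax) (EFin : R -> \bar R).
Proof. by apply/measurable_EFinP. Qed.

Lemma tp_mass x y p : dom lmax x -> dom lmax y -> tp x y p (dom lmax) = 1%E.
Proof.
move=> Dx Dy; rewrite tpE !diracE !mem_set //= !mule1 -EFinD.
by rewrite addrC subrK.
Qed.

Lemma tp_feas x y p : dom lmax x -> dom lmax y -> 0 <= p <= 1 ->
  p * y + (1 - p) * x <= 1 -> feasible lmax (tp x y p).
Proof.
move=> Dx Dy p01 m1; split; first exact: tp_mass.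
rewrite (tp_integral _ (mdom lmax) mEFin) //; last first.
  by move=> z /domP /andP[z0 _]; rewrite lee_fin.
by rewrite qcE // -!EFinM -EFinD lee_fin.
Qed.

Hypothesis cF : {within `[0, lmax], continuous F}.
Hypothesis F0 : forall x, x \in `[0, lmax] -> 0 <= F x.

Lemma mFE : measurable_fun (dom lmax) (fun x => (F x)%:E).
Proof. by apply/measurable_EFinP; exact: mF. Qed.

Lemma tp_obj x y p : dom lmax x -> dom lmax y -> 0 <= p <= 1 ->
  objective lmax F (tp x y p) = (p * F y + (1 - p) * F x)%:E.
Proof.
move=> Dx Dy p01; rewrite /objective.
have g0 : forall z, dom lmax z -> (0 <= (F z)%:E)%E.
  by move=> z Dz; rewrite lee_fin F0 //; move/domP: Dz; rewrite in_itv.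
rewrite (tp_integral _ (mdom lmax) mFE g0 Dx Dy).
by rewrite qcE // -!EFinM -EFinD.
Qed.

Lemma Fstar_ge (mu : probability R R) : feasible lmax mu ->
  (objective lmax F mu <= Fstar lmax F)%E.
Proof. by move=> fm; apply: le_ereal_sup_tmp; exists (objective lmax F mu) => //; exists mu. Qed.

Lemma Fstar_le (v : \bar R) :
  (forall mu : probability R R, feasible lmax mu -> objective lmax F mu <= v)%E ->
  (Fstar lmax F <= v)%E.
Proof. by move=> H; apply: ge_ereal_sup => _ [mu [fm <-]]; exact: H. Qed.

Lemma cl_two (cl : concave_like lmax F) x1 x2 : dom lmax x1 -> dom lmax x2 ->
  x2 < 1 < x1 -> (1 - x2) * F x1 + (x1 - 1) * F x2 < (x1 - x2) * F 1.
Proof.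
move=> D1 D2 /andP[x21 x11].
have d0 : 0 < x1 - x2 by lra.
pose p := (1 - x2) / (x1 - x2).
have p0 : 0 < p by apply: divr_gt0; lra.
have p1 : p < 1 by rewrite /p ltr_pdivrMr // mul1r; lra.
have e1 : 1 - p = (x1 - 1) / (x1 - x2) by rewrite /p; field; lra.
have H := cl x1 x2 p.
have := H; move: D1 D2 => /domP D1 /domP D2.
rewrite !in_itv /= D1 D2 => /(_ isT isT).
have n1 : x1 != 1 by rewrite gt_eqF.
have n2 : x2 != 1 by rewrite lt_eqF.
move=> /(_ n1 n2); rewrite p0 p1 => /(_ isT).
have -> : p * x1 + (1 - p) * x2 = 1 by rewrite e1 /p; field; lra.
move=> /(_ erefl) Hl.
have := Hl; rewrite -(ltr_pM2l d0) mulrDr e1 /p.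
have -> : (x1 - x2) * ((1 - x2) / (x1 - x2) * F x1) = (1 - x2) * F x1 by field; lra.
have -> : (x1 - x2) * ((x1 - 1) / (x1 - x2) * F x2) = (x1 - 1) * F x2 by field; lra.
by [].
Qed.
End Part.

Section Tangent.
Context {R : realType} (lmax : R) (F : R -> R).
Hypothesis l1 : 1 < lmax.
Hypothesis cl : concave_like lmax F.
Variable d : R.
Hypothesis Hd : is_derive (1:R) (1:R) F d.

Lemma tangent x : dom lmax x -> F x <= F 1 + d * (x - 1).
Proof.
move=> Dx; have /domP /andP[x0 xl] := Dx.
have [x1|x1|->] := ltgtP x 1; last by rewrite subrr mulr0 addr0.
- rewrite leNgt; apply/negP => H.
  pose P := (F 1 - F x) / (1 - x).
  have PE : P * (1 - x) = F 1 - F x by rewrite /P; field; lra.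
  have Pd : P < d.
    by rewrite /P ltr_pdivrMr; lra.
  have dP : 0 < d - P by lra.
  have [del del0 Hdel] := deriv_eps Hd dP.
  pose h := Num.min (del / 2) (lmax - 1).
  have h0 : 0 < h.
    rewrite lt_min; apply/andP; split; last first.
      have := l1; lra.
    by rewrite divr_gt0.
  have hl : h <= lmax - 1 by rewrite ge_min lexx orbT.
  have hd : h < del by rewrite /h gt_min; apply/orP; left; lra.
  have := Hdel h; rewrite gtr0_norm // h0 hd => /(_ isT).
  pose Q := h^-1 * (F (h + 1) - F 1).
  have QE : Q * h = F (h + 1) - F 1 by rewrite /Q; field; lra.
  rewrite -/Q => HQ.
  have PQ : P < Q.
    have := ler_norm (d - Q); lra.
  have Dy : dom lmax (h + 1) by apply/domP; apply/andP; split; lra.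
  have := cl_two cl Dy Dx.
  have -> : (x < 1 < h + 1) = true by apply/andP; split; lra.
  move=> /(_ isT) Hc.
  have H1 : (1 - x) * (Q * h) < h * (P * (1 - x)) by rewrite QE PE; lra.
  have : ((1 - x) * h) * Q < ((1 - x) * h) * P by lra.
  rewrite ltr_pM2l; [lra|]; apply: mulr_gt0; lra.
- rewrite leNgt; apply/negP => H.
  pose P := (F x - F 1) / (x - 1).
  have PE : P * (x - 1) = F x - F 1 by rewrite /P; field; lra.
  have Pd : d < P.
    by rewrite /P ltr_pdivlMr; lra.
  have dP : 0 < P - d by lra.
  have [del del0 Hdel] := deriv_eps Hd dP.
  pose h := - Num.min (del / 2) (1 / 2).
  have h0 : h < 0 by rewrite /h oppr_lt0 lt_min; apply/andP; split; lra.
  have hl : - (1 / 2) <= h by rewrite /h lerN2 ge_min lexx orbT.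
  have hd : - h < del by rewrite /h opprK gt_min; apply/orP; left; lra.
  have := Hdel h; rewrite ltr0_norm // oppr_gt0 h0 hd => /(_ isT).
  pose Q := h^-1 * (F (h + 1) - F 1).
  have QE : Q * h = F (h + 1) - F 1 by rewrite /Q; field; lra.
  rewrite -/Q => HQ.
  have PQ : Q < P.
    have := ler_norm (- (d - Q)); rewrite normrN; lra.
  have Dy : dom lmax (h + 1) by apply/domP; apply/andP; split; lra.
  have := cl_two cl Dx Dy.
  have -> : (h + 1 < 1 < x) = true by apply/andP; split; lra.
  move=> /(_ isT) Hc.
  have H1 : (- h) * (P * (x - 1)) < (x - 1) * (- (Q * h)) by rewrite QE PE; lra.
  have : ((x - 1) * (- h)) * P < ((x - 1) * (- h)) * Q by lra.
  rewrite ltr_pM2l; [lra|]; apply: mulr_gt0; lra.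
Qed.
End Tangent.

Section P1aux.
Context {R : realType} (lmax : R).

Lemma maff (c b : R) : measurable_fun (dom lmax) (fun x : R => c + b * x).
Proof.
apply: measurable_funD; first exact: measurable_cst.
apply: measurable_funM; first exact: measurable_cst.
exact: measurable_id.
Qed.

Lemma msh : measurable_fun (dom lmax) (fun x : R => x - 1).
Proof. apply: measurable_funB; [exact: measurable_id|exact: measurable_cst]. Qed.

Lemma aff_int (mu : probability R R) (c b : R) : mu (dom lmax) = 1%E ->
  (\int[mu]_(x in dom lmax) ((c + b * x)%:E) =
   c%:E + b%:E * \int[mu]_(x in dom lmax) x%:E)%E.
Proof.
move=> muD.
have Dx x : dom lmax x -> 0 <= x <= lmax by move/domP.
have iid : mu.-integrable (dom lmax) (EFin \o id).
  apply: (@bnd_int _ _ _ _ lmax) => // x /Dx /andP[x0 xl]; by rewrite ger0_norm.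
have ic : mu.-integrable (dom lmax) (EFin \o cst c).
  by apply: (@bnd_int _ _ _ _ `|c|) => //.
transitivity (\int[mu]_(x in dom lmax) ((EFin \o cst c) x + b%:E * (EFin \o id) x))%E.
  by apply: eq_integral => x _ /=; rewrite EFinD EFinM.
rewrite (integralD (mdom lmax) ic (integrableZl (mdom lmax) b iid)).
have -> : (\int[mu]_(x in dom lmax) (EFin \o cst c) x = c%:E)%E.
  have := integral_cst mu (mdom lmax) c%:E. rewrite /=.
  by move=> ->; rewrite muD mule1.
by rewrite (integralZl (mdom lmax) iid).
Qed.

Lemma ereal_addr_eq (a : \bar R) (r s : R) : (a + r%:E = s%:E)%E -> a = (s - r)%:E.
Proof.
case: a => [a'| |] //= H.
by move: H => [] <-; rewrite addrK.
Qed.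

Lemma fin_step (mu : probability R R) (s : R) : (s = 1 \/ s = -1) ->
  1 < lmax ->
  mu (dom lmax) = 1%E -> (\int[mu]_(x in dom lmax) x%:E = 1)%E ->
  mu.-negligible [set x | dom lmax x /\ s * (x - 1) < 0] ->
  mu [set 1] = 1%E.
Proof.
move=> s1 l1 muD I1 neg.
have mD := mdom lmax.
have ae1 : ae_eq mu (dom lmax) (fun x => (`|x - 1|)%:E) (fun x => (s * (x - 1))%:E).
  apply: negligibleS neg => x /= H; split.
    apply: contrapT => nD; apply: H => Dx; exfalso; exact: nD.
  rewrite ltNge; apply/negP => sx; apply: H => _.
  congr EFin; move: sx; case: s1 => -> sx; rewrite ?mul1r ?mulN1r in sx *.
    by rewrite ger0_norm.
  by rewrite ler0_norm // -oppr_ge0.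
have mab : measurable_fun (dom lmax) (fun x : R => (`|x - 1|)%:E).
  apply/measurable_EFinP.
  have := measurableT_comp (@normr_measurable R _) msh.
  by apply.
have maf : measurable_fun (dom lmax) (fun x : R => (s * (x - 1))%:E).
  apply/measurable_EFinP.
  have -> : (fun x : R => s * (x - 1)) = (fun x => - s + s * x).
    by apply: funext => x; ring.
  exact: maff.
have Iabs : (\int[mu]_(x in dom lmax) (`|x - 1|)%:E = 0)%E.
  rewrite (ae_eq_integral _ _ mD mab maf ae1).
  transitivity (\int[mu]_(x in dom lmax) ((- s + s * x)%:E))%E.
    by apply: eq_integral => x _; congr EFin; ring.
  by rewrite aff_int // I1 mule1 -EFinD addNr.
have : (\int[mu]_(x in dom lmax) `|(x - 1)%:E| = 0)%E.
  by rewrite -Iabs; apply: eq_integral => x _.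
move/(ae_eq_integral_abs mu mD (_ : measurable_fun (dom lmax) (fun x : R => (x - 1)%:E))).
move=> /(_ _) ae0.
have ae0' : ae_eq mu (dom lmax) (fun x : R => (x - 1)%:E) (cst 0%E).
  apply: ae0; apply/measurable_EFinP; exact: msh.
have negD : mu.-negligible (dom lmax `\` [set 1]).
  apply: negligibleS ae0' => x /= [Dx x1] H; apply: x1.
  by have := H Dx => -[] /eqP; rewrite subr_eq0 => /eqP.
have m1 : measurable [set (1:R)] by exact: measurable_set1.
rewrite -muD (measureDI mu mD m1) (measure_negligible _ negD); last exact: measurableD.
rewrite add0e setIidr // => x -> /=; apply/domP; apply/andP; split; lra.
Qed.
End P1aux.

Section P1.
Context {R : realType} (lmax : R) (F : R -> R).
Hypothesis l1 : 1 < lmax.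
Hypothesis cF : {within `[0, lmax], continuous F}.
Hypothesis F0 : forall x, x \in `[0, lmax] -> 0 <= F x.
Hypothesis cl : concave_like lmax F.
Variable d : R.
Hypothesis d0 : 0 < d.
Hypothesis Hd : is_derive (1:R) (1:R) F d.

Let D1 : dom lmax 1.
Proof. apply/domP; apply/andP; split; [exact: ler01| exact: ltW]. Qed.

Let F0' x : dom lmax x -> 0 <= F x.
Proof. by move=> /domP Dx; apply: F0; rewrite in_itv. Qed.

Let bnd (mu : probability R R) : feasible lmax mu -> (objective lmax F mu <= (F 1)%:E)%E.
Proof.
move=> fm.
have H : forall x, dom lmax x -> 0 <= F x <= (F 1 - d) + d * x.
  move=> x Dx; rewrite F0' //=; have := tangent l1 cl Hd Dx; lra.
have := line_bound fm (mF cF) (ltW d0) H.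
by rewrite subrK.
Qed.

Let feas1 : feasible lmax (tp 1 1 1).
Proof. apply: tp_feas => //; rewrite ?ler01 ?lexx //. Qed.

Let obj1 : objective lmax F (tp 1 1 1) = (F 1)%:E.
Proof.
rewrite tp_obj //; last by rewrite ler01 lexx.
by rewrite subrr mul0r addr0 mul1r.
Qed.

Lemma Fstar1 : Fstar lmax F = (F 1)%:E.
Proof.
apply/le_anti/andP; split; first exact: Fstar_le.
by rewrite -obj1; apply: Fstar_ge.
Qed.

Lemma part1_exists : exists mu : probability R R, optimal lmax F mu.
Proof. by exists (tp 1 1 1); split => //; rewrite obj1 Fstar1. Qed.

Lemma part1_uniq (mu : probability R R) : optimal lmax F mu -> mu [set 1] = 1%E.
Proof.
move=> [[muD muI] obj]; rewrite Fstar1 /objective in obj.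
have mD := mdom lmax.
pose c := F 1 - d.
pose h x := c + d * x - F x.
have h0 x : dom lmax x -> 0 <= h x.
  move=> Dx; have := tangent l1 cl Hd Dx; rewrite /h /c; lra.
have mh : measurable_fun (dom lmax) (fun x => (h x)%:E).
  apply/measurable_EFinP; apply: measurable_funB; first exact: maff.
  exact: mF.
pose I := (\int[mu]_(x in dom lmax) x%:E)%E.
have I0 : (0 <= I)%E.
  by apply: integral_ge0 => x /domP /andP[x0 _]; rewrite lee_fin.
have Ifin : I = (fine I)%:E.
  rewrite fineK // ge0_fin_numE //; exact: (le_lt_trans muI (ltry _)).
set i := fine I in Ifin.
have i1 : i <= 1 by rewrite -lee_fin -Ifin.
have Esplit : (\int[mu]_(x in dom lmax) ((c + d * x)%:E) =
   \int[mu]_(x in dom lmax) (h x)%:E + \int[mu]_(x in dom lmax) (F x)%:E)%E.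
  have hh0 : forall x, dom lmax x -> (0 <= (h x)%:E)%E.
    by move=> x Dx; rewrite lee_fin h0.
  have FF0 : forall x, dom lmax x -> (0 <= (F x)%:E)%E.
    by move=> x Dx; rewrite lee_fin F0'.
  rewrite -(ge0_integralD mu mD hh0 mh FF0 (mFE cF)).
  by apply: eq_integral => x _; rewrite -EFinD /h subrK.
rewrite aff_int // -/I Ifin obj -EFinM -EFinD in Esplit.
have Ih := ereal_addr_eq (esym Esplit).
have Ih0 : (0 <= \int[mu]_(x in dom lmax) (h x)%:E)%E.
  by apply: integral_ge0 => x Dx; rewrite lee_fin h0.
rewrite Ih lee_fin /c in Ih0.
have ie : i = 1.
  apply/le_anti; rewrite i1 /=.
  have : 0 <= d * (i - 1) by move: Ih0; rewrite mulrBr mulr1; lra.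
  by rewrite pmulr_rge0 // subr_ge0.
have Ih00 : (\int[mu]_(x in dom lmax) (h x)%:E = 0)%E.
  by rewrite Ih ie /c; congr EFin; ring.
have : (\int[mu]_(x in dom lmax) `|(h x)%:E| = 0)%E.
  rewrite -Ih00; apply: eq_integral => x /[!inE] Dx.
  by rewrite gee0_abs // lee_fin h0.
move/(ae_eq_integral_abs mu mD mh) => [N [mN N0 sN]].
have hz x : dom lmax x -> ~ N x -> h x = 0.
  move=> Dx Nx; apply: contrapT => hx; apply: Nx; apply: sN => /= H.
  by apply: hx; have := H Dx => -[].
have Feq x : dom lmax x -> ~ N x -> F x = c + d * x.
  move=> Dx Nx; have := hz x Dx Nx; rewrite /h; lra.
have I1 : I = 1%E by rewrite Ifin ie.
have [[a [Da [a1 Na]]]|noA] := pselect (exists a, dom lmax a /\ a < 1 /\ ~ N a).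
- apply: (@fin_step _ lmax mu (-1)) => //; first by right.
  exists N; split => // b /= [Db]; rewrite mulN1r oppr_lt0 subr_gt0 => b1.
  apply: contrapT => Nb.
  have := cl_two cl Db Da; rewrite a1 b1 => /(_ isT).
  have -> : (1 - a) * F b + (b - 1) * F a = (b - a) * F 1.
    rewrite (Feq b Db Nb) (Feq a Da Na) /c; ring.
  by rewrite ltxx.
- apply: (@fin_step _ lmax mu 1) => //; first by left.
  exists N; split => // b /= [Db]; rewrite mul1r subr_lt0 => b1.
  apply: contrapT => Nb; apply: noA; exists b; split => //.
Qed.
End P1.

Section P2aux.
Context {R : realType}.

Lemma contlin (a b lm : R) (F : R -> R) (al be : R) : 0 <= a -> b <= lm ->
  {within `[0, lm], continuous F} ->
  {within `[a, b], continuous (fun z => al + be * z - F z)}.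
Proof.
move=> a0 blm cF.
have AB : [set` `[a, b]] `<=` [set` `[0, lm]].
  move=> z /=; rewrite !in_itv /= => /andP[az zb]; apply/andP; split; lra.
have cFA := continuous_subspaceW AB cF.
have -> : (fun z => al + be * z - F z) = (cst al + (cst be \* id)) - F.
  by apply: funext => z.
move=> x; apply: continuousB; last exact: cFA.
apply: continuousD; first exact: cst_continuous.
apply: continuousM; first exact: cst_continuous.
exact: (continuous_subspaceT (f := id) (fun z => @cvg_id _ _)).
Qed.
End P2aux.

Section P2.
Context {R : realType} (lmax : R) (F : R -> R).
Hypothesis l1 : 1 < lmax.
Hypothesis cF : {within `[0, lmax], continuous F}.
Hypothesis F0 : forall x, x \in `[0, lmax] -> 0 <= F x.
Hypothesis F00 : F 0 = 0.
Hypothesis Hlt : forall x, x \in `[0, 1[ -> ((F x)%:E < Fstar lmax F)%E.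

Let F0' x : dom lmax x -> 0 <= F x.
Proof. by move=> /domP Dx; apply: F0; rewrite in_itv. Qed.

Definition goal2 := exists (x1 x2 p : R), [/\ x1 \in `]1, lmax], x2 \in `[0, 1[, 0 < p < 1 &
       exists mu : probability R R,
         [/\ mu [set x1] = p%:E, mu [set x2] = (1 - p)%:E & optimal lmax F mu]].

Lemma pfacts (a b : R) : a < 1 -> 1 < b ->
  0 < (1 - a) / (b - a) < 1 /\ (1 - a) / (b - a) * b + (1 - (1 - a) / (b - a)) * a = 1.
Proof.
move=> a1 b1; have d0 : 0 < b - a by lra.
split; last by field; rewrite ?mulf_neq0 ?gt_eqF.
apply/andP; split; first by apply: divr_gt0; lra.
by rewrite ltr_pdivrMr // mul1r; lra.
Qed.

Lemma tp_at_y (a b P : R) : a != b -> tp a b P [set b] = (qc P)%:E.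
Proof.
move=> ab; rewrite tpE !diracE mem_set //= memNset /=; last first.
  by move=> H; move: ab; rewrite H eqxx.
by rewrite mule1 mule0 adde0.
Qed.

Lemma tp_at_x (a b P : R) : a != b -> tp a b P [set a] = (1 - qc P)%:E.
Proof.
move=> ab; rewrite tpE !diracE memNset /=; last first.
  by move=> H; move: ab; rewrite H eqxx.
by rewrite mem_set //= mule1 mule0 add0e.
Qed.

Lemma wit a b P : dom lmax a -> dom lmax b -> a < 1 -> 1 < b -> 0 < P < 1 ->
  P * b + (1 - P) * a = 1 ->
  (Fstar lmax F <= (P * F b + (1 - P) * F a)%:E)%E -> goal2.
Proof.
move=> Da Db a1 b1 P01 mean Hge.
have /domP /andP[a0 al] := Da; have /domP /andP[b0 bl] := Db.
have P01' : 0 <= P <= 1 by move: P01 => /andP[? ?]; apply/andP; split; lra.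
have ab : a != b by rewrite lt_eqF //; lra.
exists b, a, P; split => //.
- by rewrite in_itv /= b1 bl.
- by rewrite in_itv /= a0 a1.
exists (tp a b P); split.
- by move: (tp_at_y P ab); rewrite qcE // => H; exact: H.
- by move: (tp_at_x P ab); rewrite qcE // => H; exact: H.
- split; first by apply: tp_feas => //; rewrite mean.
  have obj := tp_obj cF F0 Da Db P01'.
  apply/le_anti/andP; split; last by rewrite obj.
  by apply: Fstar_ge; apply: tp_feas => //; rewrite mean.
Qed.

Lemma div_le (a c p q : R) : 0 < p -> 0 < q -> a * q <= c * p -> a / p <= c / q.
Proof.
move=> p0 q0 H; rewrite -(ler_pM2r (mulr_gt0 p0 q0)).
have -> : a / p * (p * q) = a * q by field; rewrite ?mulf_neq0 ?gt_eqF.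
have -> : c / q * (p * q) = c * p by field; rewrite ?mulf_neq0 ?gt_eqF.
exact: H.
Qed.

Lemma Fstar_fin : exists v, Fstar lmax F = v%:E /\ 0 < v.
Proof.
have l0 : (0:R) <= lmax by have := l1; lra.
have [c0 c0in Hc0] := EVT_max l0 cF.
have ub : (Fstar lmax F <= (F c0)%:E)%E.
  apply: Fstar_le => mu fm.
  have H : forall x, dom lmax x -> 0 <= F x <= F c0 + 0 * x.
    move=> x Dx; rewrite F0' //= mul0r addr0; apply: Hc0; move/domP: Dx.
    by rewrite in_itv.
  by have := line_bound fm (mF cF) (lexx 0) H; rewrite addr0.
have lb := Hlt (_ : 0 \in `[0, 1[); rewrite in_itv /= lexx ltr01 F00 in lb.
have lb' := lb isT.
have Ffin : Fstar lmax F \is a fin_num.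
  by rewrite fin_numElt (lt_trans _ lb') ?ltNyr //= (le_lt_trans ub) ?ltry.
exists (fine (Fstar lmax F)); split; first by rewrite fineK.
by rewrite -lte_fin fineK.
Qed.
End P2.

Section P2main.
Context {R : realType} (lmax : R) (F : R -> R).
Hypothesis l1 : 1 < lmax.
Hypothesis cF : {within `[0, lmax], continuous F}.
Hypothesis F0 : forall x, x \in `[0, lmax] -> 0 <= F x.
Hypothesis F00 : F 0 = 0.
Hypothesis Hlt : forall x, x \in `[0, 1[ -> ((F x)%:E < Fstar lmax F)%E.

Let F0' x : dom lmax x -> 0 <= F x.
Proof. by move=> /domP Dx; apply: F0; rewrite in_itv. Qed.

Lemma part2 : ~ concave_like lmax F -> goal2 lmax F.
Proof.
move=> ncl.
have l1' : 1 < lmax := l1.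
have [v [Fv v0]] := Fstar_fin l1 cF F0 F00 Hlt.
have objle (mu : probability R R) : feasible lmax mu -> (objective lmax F mu <= v%:E)%E.
  by rewrite -Fv; exact: Fstar_ge.
have Hlt' x : 0 <= x < 1 -> F x < v.
  by move=> x01; rewrite -lte_fin -Fv; apply: Hlt; rewrite in_itv.
have Dom x : 0 <= x <= lmax -> dom lmax x by move=> ?; apply/domP.
have Dirac x : 0 <= x <= 1 -> F x <= v.
  move=> /andP[x0 x1].
  have Dx : dom lmax x by apply: Dom; apply/andP; split => //; move: l1'; lra.
  have p01 : 0 <= (1:R) <= 1 by lra.
  have m1 : 1 * x + (1 - 1) * x <= 1 by rewrite subrr mul0r addr0 mul1r.
  have := objle _ (tp_feas Dx Dx p01 m1).
  by rewrite (tp_obj cF F0 Dx Dx p01) lee_fin subrr !mul0r !mul1r addr0.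
have Two a b : dom lmax a -> dom lmax b -> a < 1 -> 1 < b ->
    (1 - a) * F b + (b - 1) * F a <= (b - a) * v.
  move=> Da Db a1 b1.
  have [/andP[P0 P1] mean] := pfacts a1 b1.
  set P := (1 - a) / (b - a) in P0 P1 mean.
  have P01 : 0 <= P <= 1 by apply/andP; split; lra.
  have mle : P * b + (1 - P) * a <= 1 by rewrite mean.
  have := objle _ (tp_feas Da Db P01 mle).
  rewrite (tp_obj cF F0 Da Db P01) lee_fin => H.
  have d0 : 0 < b - a by lra.
  have -> : (1 - a) * F b + (b - 1) * F a = (b - a) * (P * F b + (1 - P) * F a).
    by rewrite /P; field; lra.
  by rewrite ler_pM2l.
have F1v : F 1 <= v by apply: Dirac; rewrite ler01 lexx.
have [F1lt|F1ge] := ltP (F 1) v; last first.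
  have F1e : F 1 = v by apply/le_anti; rewrite F1v F1ge.
  apply: contrapT => Hno; apply: ncl => x1 x2 p X1 X2 n1 n2 /andP[p0 p1] mean.
  rewrite ltNge; apply/negP => Hge; apply: Hno.
  have D1 : dom lmax x1 by apply/domP; move: X1; rewrite in_itv.
  have D2 : dom lmax x2 by apply/domP; move: X2; rewrite in_itv.
  move: n1 n2; rewrite !neq_lt => /orP[x1l|x1g] /orP[x2l|x2g].
  - exfalso; nra.
  - apply: (@wit _ lmax F cF F0 x1 x2 (1 - p)) => //.
    + by apply/andP; split; lra.
    + lra.
    + by rewrite Fv lee_fin -F1e; lra.
  - apply: (@wit _ lmax F cF F0 x2 x1 p) => //.
    + by apply/andP; split; lra.
    + by rewrite Fv lee_fin -F1e; lra.
  - exfalso; nra.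
pose Sset := [set (F y - v) / (y - 1) | y in [set y : R | 1 < y <= lmax]].
have Sne : Sset !=set0.
  by exists ((F lmax - v) / (lmax - 1)); exists lmax => //=; rewrite l1' lexx.
have Sub : ubound Sset v.
  move=> _ [y /= /andP[y1 yl] <-].
  have Dy : dom lmax y by apply: Dom; apply/andP; split; lra.
  have D0 : dom lmax 0 by apply: Dom; rewrite lexx /=; lra.
  have := Two 0 y D0 Dy ltr01 y1; rewrite F00 mulr0 addr0 subr0 subr0 mul1r => H.
  by rewrite ler_pdivrMr; [lra|lra].
have hasS : has_ubound Sset by exists v.
set s := sup Sset.
have Sle y : 1 < y <= lmax -> F y <= v + s * (y - 1).
  move=> /andP[y1 yl].
  have : (F y - v) / (y - 1) <= s.
    by apply: ub_le_sup => //; exists y => //=; rewrite y1 yl.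
  by rewrite ler_pdivrMr; lra.
have Tge x : 0 <= x < 1 -> F x <= v + s * (x - 1).
  move=> /andP[x0 x1].
  have Dx : dom lmax x by apply: Dom; apply/andP; split => //; move: l1'; lra.
  have : s <= (v - F x) / (1 - x).
    apply: ge_sup => // _ [y /= /andP[y1 yl] <-].
    have Dy : dom lmax y by apply: Dom; apply/andP; split; lra.
    apply: div_le; [lra|lra|].
    have := Two x y Dx Dy x1 y1; lra.
  by rewrite ler_pdivlMr; lra.
pose u z := (v - s) + s * z - F z.
have uge z : 0 <= z <= lmax -> 0 <= u z.
  move=> /andP[z0 zl]; rewrite /u.
  have [z1|z1|->] := ltgtP z 1.
  - have := Tge z; rewrite z0 z1 => /(_ isT); lra.
  - have := Sle z; rewrite z1 zl => /(_ isT); lra.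
  - lra.
have u1 : 0 < u 1 by rewrite /u; lra.
have [ys ysin Hys] := EVT_min (ltW l1') (contlin (al := v - s) (be := s) ler01 (lexx lmax) cF).
have [xs xsin Hxs] := EVT_min ler01 (contlin (al := v - s) (be := s) (lexx 0) (ltW l1') cF).
move: ysin xsin; rewrite !in_itv /= => /andP[ys1 ysl] /andP[xs0 xs1].
have uys : u ys = 0.
  apply/eqP; rewrite eq_le uge ?andbT; last by apply/andP; split; lra.
  rewrite leNgt; apply/negP => ue.
  pose k := u ys / (lmax - 1).
  have k0 : 0 < k by apply: divr_gt0; lra.
  have kE : k * (lmax - 1) = u ys by rewrite /k; field; lra.
  rewrite /u in kE ue.
  have : s <= s - k.
    apply: ge_sup => // _ [y /= /andP[y1 yl] <-].
    have := Hys y; rewrite in_itv /= yl (ltW y1) => /(_ isT); rewrite /u => Hy.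
    have : k * (y - 1) <= k * (lmax - 1) by rewrite ler_pM2l //; lra.
    by rewrite ler_pdivrMr; lra.
  lra.
have ys1' : 1 < ys.
  rewrite lt_neqAle ys1 andbT; apply/eqP => ys1e; move: uys; rewrite -ys1e; lra.
have uxs : u xs = 0.
  apply/eqP; rewrite eq_le uge ?andbT; last by apply/andP; split; lra.
  rewrite leNgt; apply/negP => ue.
  pose del := u xs / 2.
  have del0 : 0 < del by rewrite /del; lra.
  have delE : 2 * del = v - s + s * xs - F xs by rewrite /del /u; lra.
  pose b := Num.max (s + del) 0.
  have b0 : 0 <= b by rewrite /b le_max lexx orbT.
  have bs : s + del <= b by rewrite /b le_max lexx.
  pose g z := (v - b) + b * z - F z.
  have gpos z : 0 <= z <= lmax -> 0 < g z.
    move=> /andP[z0 zl]; rewrite /g.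
    have [z1|z1] := leP z 1.
    + have [sd|sd] := leP 0 (s + del).
      * have bE : b = s + del by rewrite /b; apply/max_idPl.
        have := Hxs z; rewrite in_itv /= z0 z1 => /(_ isT); rewrite /u bE.
        have : del * (1 - z) <= del * 1 by rewrite ler_pM2l //; lra.
        lra.
      * have bE : b = 0 by rewrite /b; apply/max_idPr; lra.
        rewrite bE mul0r addr0 subr0.
        have [z1'|z1'] := ltP z 1.
          by have := Hlt' z; rewrite z0 z1' => /(_ isT); lra.
        have -> : z = 1 by apply/le_anti; rewrite z1 z1'.
        lra.
    + have := Sle z; rewrite z1 zl => /(_ isT) Hz.
      have : (s + del) * (z - 1) <= b * (z - 1) by rewrite ler_pM2r //; lra.
      have : 0 < del * (z - 1) by apply: mulr_gt0; lra.
      lra.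
  have [zs zsin Hzs] := EVT_min (ltW (lt_trans ltr01 l1')) (contlin (al := v - b) (be := b) (lexx 0) (lexx lmax) cF).
  move: zsin; rewrite in_itv /= => zsin.
  have e0 := gpos zs zsin.
  set e := g zs in e0.
  have : (Fstar lmax F <= (v - e)%:E)%E.
    apply: Fstar_le => mu fm.
    have H : forall x, dom lmax x -> 0 <= F x <= (v - b - e) + b * x.
      move=> x /domP Dx; rewrite F0' ?Dom //=.
      have := Hzs x; rewrite in_itv /= Dx => /(_ isT); rewrite /e /g; lra.
    have := line_bound fm (mF cF) b0 H.
    by have -> : v - b - e + b = v - e by ring.
  by rewrite Fv lee_fin; lra.
have xs1' : xs < 1.
  rewrite lt_neqAle xs1 andbT; apply/eqP => xs1e; move: uxs; rewrite xs1e; lra.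
have Dxs : dom lmax xs by apply: Dom; apply/andP; split => //; move: l1'; lra.
have Dys : dom lmax ys by apply: Dom; apply/andP; split => //; lra.
have [P01 mean] := pfacts xs1' ys1'.
apply: (@wit _ lmax F cF F0 xs ys ((1 - xs) / (ys - xs))) => //.
rewrite Fv lee_fin.
have Fxs : F xs = v + s * (xs - 1) by move: uxs; rewrite /u; lra.
have Fys : F ys = v + s * (ys - 1) by move: uys; rewrite /u; lra.
rewrite Fxs Fys.
set P := (1 - xs) / (ys - xs) in mean *.
have -> : P * (v + s * (ys - 1)) + (1 - P) * (v + s * (xs - 1)) =
  v + s * (P * ys + (1 - P) * xs - 1) by ring.
by rewrite mean subrr mulr0 addr0.
Qed.
End P2main.

Unset Implicit Arguments.

Theorem proposition5p2 (R : realType) (lmax : R) (F : R -> R) :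
  1 < lmax ->
  C1_on 0 lmax F ->
  (forall x, x \in `[0, lmax] -> 0 <= F x) ->
  F 0 = 0 ->
  (forall x, x \in `[0, 1[ -> ((F x)%:E < Fstar lmax F)%E) ->
  0 < derive1 F 1 ->
  (concave_like lmax F ->
     (exists mu : probability R R, optimal lmax F mu) /\
     (forall mu : probability R R, optimal lmax F mu -> mu [set 1] = 1%E)) /\
  (~ concave_like lmax F ->
     exists (x1 x2 p : R), [/\ x1 \in `]1, lmax], x2 \in `[0, 1[, 0 < p < 1 &
       exists mu : probability R R,
         [/\ mu [set x1] = p%:E, mu [set x2] = (1 - p)%:E & optimal lmax F mu]]).
Proof.
move=> l1 [cF [G [cG HG]]] F0 F00 Hlt dpos.
have H1 : (1:R) \in `]0, lmax[ by rewrite in_itv /= ltr01 l1.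
have HG1 := HG 1 H1.
have Hd : is_derive (1:R) (1:R) F (derive1 F 1).
  by rewrite derive1E (@derive_val _ _ _ _ _ _ _ HG1).
split.
- move=> cl; split.
  + exact: (part1_exists l1 cF F0 cl dpos Hd).
  + move=> mu; exact: (part1_uniq l1 cF F0 cl dpos Hd).
- move=> ncl; exact: (part2 l1 cF F0 F00 Hlt ncl).
Qed.
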